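(* In the setting of the context, $(1-s)^n$ divides $\det(B(t,s))$, i.e. $G(t,s)=\det(B(t,s))/(1-s)^n\in R[t^{\pm1},s^{\pm1}]$.
   Context: Let $\bar L=\bar K\cup\bar A\subset S^3$ be a two-component link (arising as the quotient of a periodic knot $K$ of period $q$ by its periodic symmetry, with $\bar A$ the image of the axis), let $R=\mathbb{Z}$ or $\mathbb{Q}$ and let $\bar\rho\colon\pi_1(S^3-\bar K)\to GL_n(R)$ be a representation. Choose a presentation $\pi_1(S^3-\bar L)=\langle x_1,\dots,x_g\mid r_1,\dots,r_{g-1}\rangle$ coming from a 2-complex homotopy equivalent to the complement, with $x_1$ a meridian of $\bar A$. Let $\Phi$ be the ring homomorphism from $\mathbb{Z}[\pi_1(S^3-\bar L)]$ to $n\times n$ matrices over $R[t^{\pm1},s^{\pm1}]$ sending $h$ to $t^{\mathrm{lk}(h,\bar K)}s^{\mathrm{lk}(h,\bar A)}\bar\rho(h)$ (via $\pi_1(S^3-\bar L)\to\pi_1(S^3-\bar K)$). $B(t,s)$ is the $n(g-1)\times n(g-1)$ matrix obtained from the Fox derivative matrix $(\partial r_i/\partial x_j)_{1\le i\le g-1,\,2\le j\le g}$ by replacing each entry by its image under $\Phi$. *)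

(* Defs.v *)
From HB Require Import structures.
From mathcomp Require Import all_boot all_order all_algebra.
From mathcomp Require Import fraction.
Set Implicit Arguments.
Unset Strict Implicit.
Unset Printing Implicit Defensive.
Import Order.TTheory GRing.Theory Num.Theory.
Local Open Scope ring_scope.

(* A letter (k, true) is x_k, a letter (k, false) is x_k^{-1}. *)
Definition letter (g : nat) := ('I_g * bool)%type.
Definition word (g : nat) := seq (letter g).

Definition wsum (g : nat) (l : 'I_g -> int) (w : word g) : int :=
  \sum_(a <- w) (if a.2 then l a.1 else - l a.1).

Definition mxeval (R : comUnitRingType) (g n : nat) (f : 'I_g -> 'M[R]_n)
    (w : word g) : 'M[R]_n :=
  foldr (fun a M => (if a.2 then f a.1 else invmx (f a.1)) *m M) 1%:M w.

(* Elements of the integral group ring Z[F_g] as formal sums of words. *)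
Definition zgroup (g : nat) := seq (int * word g).

(* Fox derivative d w / d x_j in Z[F_g]:
   d(x_k^e w)/dx_j = d(x_k^e)/dx_j + x_k^e dw/dx_j,
   d x_k/dx_j = delta_kj, d x_k^{-1}/dx_j = - delta_kj x_k^{-1}. *)
Fixpoint fox (g : nat) (j : 'I_g) (w : word g) : zgroup g :=
  match w with
  | [::] => [::]
  | a :: w' =>
      (if a.1 == j then
         (if a.2 then [:: (1%Z, [::])] else [:: ((-1)%Z, [:: a])])
       else [::])
      ++ [seq (cu.1, a :: cu.2) | cu <- fox j w']
  end.

Section Laurent.
Variable R : idomainType.

Definition LFrac := {fraction {poly {poly R}}}.
Definition ofpoly (p : {poly {poly R}}) : LFrac := @FracField.tofrac _ p.
Definition tvar : LFrac := ofpoly 'X.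
Definition svar : LFrac := ofpoly ('X%:P).
Definition ofR (c : R) : LFrac := ofpoly (c%:P%:P).

Definition laurent (x : LFrac) : Prop :=
  exists (p : {poly {poly R}}) (a b : nat), x = ofpoly p / (tvar ^+ a * svar ^+ b).

(* Phi(h) = t^{lk(h,K)} s^{lk(h,A)} rho(h) for a word h,
   with lk(.,K) = wsum lK, lk(.,A) = wsum lA, rho given on generators. *)
Definition PhiW (g n : nat) (lK lA : 'I_g -> int) (rho : 'I_g -> 'M[R]_n)
    (h : word g) : 'M[LFrac]_n :=
  (tvar ^ wsum lK h * svar ^ wsum lA h)
    *: mxeval (fun k => map_mx ofR (rho k)) h.

Definition PhiZ (g n : nat) (lK lA : 'I_g -> int) (rho : 'I_g -> 'M[R]_n)
    (x : zgroup g) : 'M[LFrac]_n :=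
  \sum_(cw <- x) (cw.1%:~R *: PhiW lK lA rho cw.2).

(* The matrix B(t,s): generators x_0 (= x_1 of the paper, meridian of A),
   x_{lift ord0 j} for j < g; relators r_i, i < g.  Block (i,j) is
   Phi(d r_i / d x_{j+1}). *)
Definition Bmx (g n : nat) (lK lA : 'I_g.+1 -> int) (rho : 'I_g.+1 -> 'M[R]_n)
    (r : 'I_g -> word g.+1) :=
  \mxblock_(i < g, j < g) PhiZ lK lA rho (fox (lift ord0 j) (r i)).

End Laurent.

(* Main.v *)
Require Import Defs.
From HB Require Import structures.
From mathcomp Require Import all_boot all_order all_algebra.
From mathcomp Require Import fraction.
From mathcomp Require Import ring perm.
Import GRing.Theory.
Local Open Scope ring_scope.

Module Helpers.
Set Implicit Arguments.
Unset Strict Implicit.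
Unset Printing Implicit Defensive.

Section L.
Variable R : idomainType.
Local Notation F := (LFrac R).
Local Notation t := (tvar R).
Local Notation s := (svar R).

Lemma ofpolyM (p q : {poly {poly R}}) : ofpoly (p * q) = ofpoly p * ofpoly q.
Proof. exact: rmorphM. Qed.
Lemma ofpolyD (p q : {poly {poly R}}) : ofpoly (p + q) = ofpoly p + ofpoly q.
Proof. exact: rmorphD. Qed.
Lemma ofpolyN (p : {poly {poly R}}) : ofpoly (- p) = - ofpoly p.
Proof. exact: rmorphN. Qed.
Lemma ofpolyX (p : {poly {poly R}}) k : ofpoly (p ^+ k) = ofpoly p ^+ k.
Proof. exact: rmorphXn. Qed.
Lemma ofpoly1 : ofpoly 1 = 1 :> F. Proof. exact: rmorph1. Qed.
Lemma ofpoly0 : ofpoly 0 = 0 :> F. Proof. exact: rmorph0. Qed.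
Lemma ofpoly_inj (p q : {poly {poly R}}) : ofpoly p = ofpoly q -> p = q.
Proof. by move/eqP; rewrite /ofpoly tofrac_eq => /eqP. Qed.
Lemma ofpoly_eq0 (p : {poly {poly R}}) : (ofpoly p == 0) = (p == 0).
Proof. by rewrite /ofpoly tofrac_eq0. Qed.

Lemma t_neq0 : t != 0. Proof. by rewrite /tvar ofpoly_eq0 polyX_eq0. Qed.
Lemma s_neq0 : s != 0.
Proof. by rewrite /svar ofpoly_eq0 polyC_eq0 polyX_eq0. Qed.

Lemma mono_neq0 a b : t ^+ a * s ^+ b != 0.
Proof. by rewrite mulf_eq0 !expf_eq0 (negbTE t_neq0) (negbTE s_neq0) !andbF. Qed.

Lemma laurent_poly p : @laurent R (ofpoly p).
Proof. by exists p, 0%N, 0%N; rewrite !expr0 mulr1 divr1. Qed.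

Lemma laurentM x y : @laurent R x -> @laurent R y -> @laurent R (x * y).
Proof.
move=> [p [a [b ->]]] [q [c [d ->]]]; exists (p * q), (a + c)%N, (b + d)%N.
rewrite ofpolyM !exprD [X in _ = _ / X]mulrACA -mulf_div.
by [].
Qed.

Lemma laurentD x y : @laurent R x -> @laurent R y -> @laurent R (x + y).
Proof.
move=> [p [a [b ->]]] [q [c [d ->]]].
exists (p * 'X ^+ c * ('X%:P) ^+ d + q * 'X ^+ a * ('X%:P) ^+ b), (a + c)%N, (b + d)%N.
rewrite ofpolyD !ofpolyM !ofpolyX !exprD mulrACA.
rewrite addf_div ?mono_neq0 //; congr (_ / _); rewrite /tvar /svar; ring.
Qed.

Lemma laurentN x : @laurent R x -> @laurent R (- x).
Proof.
move=> [p [a [b ->]]]; exists (- p), a, b; by rewrite ofpolyN mulNr.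
Qed.

Lemma laurent1 : @laurent R 1. Proof. by rewrite -ofpoly1; apply: laurent_poly. Qed.
Lemma laurent0 : @laurent R 0. Proof. by rewrite -ofpoly0; apply: laurent_poly. Qed.

Lemma laurent_sum (I : Type) (r : seq I) (P : pred I) (f : I -> F) :
  (forall i, P i -> @laurent R (f i)) -> @laurent R (\sum_(i <- r | P i) f i).
Proof. by move=> h; apply: big_ind => //; [apply: laurent0|apply: laurentD]. Qed.
Lemma laurent_prod (I : Type) (r : seq I) (P : pred I) (f : I -> F) :
  (forall i, P i -> @laurent R (f i)) -> @laurent R (\prod_(i <- r | P i) f i).
Proof. by move=> h; apply: big_ind => //; [apply: laurent1|apply: laurentM]. Qed.

Lemma laurent_det m (M : 'M[F]_m) : (forall i j, @laurent R (M i j)) -> @laurent R (\det M).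
Proof.
move=> h; rewrite /determinant; apply: laurent_sum => sg _.
apply: laurentM; last by apply: laurent_prod.
case: (odd_perm sg); rewrite /= ?expr1 ?expr0; [apply: laurentN|]; apply: laurent1.
Qed.

Definition lmx m k (M : 'M[F]_(m, k)) := forall i j, @laurent R (M i j).

Lemma lmx_mul m k l (A : 'M[F]_(m, k)) (B : 'M[F]_(k, l)) :
  lmx A -> lmx B -> lmx (A *m B).
Proof. by move=> hA hB i j; rewrite mxE; apply: laurent_sum => q _; apply: laurentM. Qed.
Lemma lmx_add m k (A B : 'M[F]_(m, k)) : lmx A -> lmx B -> lmx (A + B).
Proof. by move=> hA hB i j; rewrite mxE; apply: laurentD. Qed.
Lemma lmx_opp m k (A : 'M[F]_(m, k)) : lmx A -> lmx (- A).
Proof. by move=> hA i j; rewrite mxE; apply: laurentN. Qed.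

Lemma laurent_tz (z : int) : @laurent R (t ^ z).
Proof.
case: z => m.
  have -> : t ^ (Posz m) = ofpoly ('X ^+ m) by rewrite ofpolyX.
  by apply: laurent_poly.
exists 1, m.+1, 0%N; rewrite ofpoly1 expr0 mulr1 NegzE -invr_expz div1r //=.
Qed.

Lemma laurent_sz (z : int) : @laurent R (s ^ z).
Proof.
case: z => m.
  have -> : s ^ (Posz m) = ofpoly (('X%:P) ^+ m) by rewrite ofpolyX.
  by apply: laurent_poly.
exists 1, 0%N, m.+1; rewrite ofpoly1 expr0 mul1r NegzE -invr_expz mul1r //=.
Qed.

Lemma laurent_int (z : int) : @laurent R (z%:~R).
Proof. by rewrite -(rmorph_int (@FracField.tofrac _ : {poly {poly R}} -> F)); apply: laurent_poly. Qed.

Lemma laurent_ofR c : @laurent R (ofR c).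
Proof. exact: laurent_poly. Qed.

End L.

Lemma zh1 (V : zmodType) (x y z : V) : (- x + y) + (z - y) = z - x.
Proof. by rewrite addrC -addrA (addrCA (-y)) addNr addr0. Qed.
Lemma zh2 (V : zmodType) (x y z : V) : y - x + (z - y) = z - x.
Proof. by rewrite addrC addrA subrK. Qed.

Section Fox.
Variables (R : idomainType) (g n : nat) (lK lA : 'I_g -> int) (rho : 'I_g -> 'M[R]_n).
Hypothesis hunit : forall k, rho k \in unitmx.
Local Notation F := (LFrac R).
Local Notation t := (tvar R).
Local Notation s := (svar R).
Local Notation PW := (PhiW lK lA rho).
Local Notation PZ := (PhiZ lK lA rho).

HB.instance Definition _ := GRing.RMorphism.copy (@ofR R)
  ((@FracField.tofrac _ : {poly {poly R}} -> LFrac R) \o polyC \o polyC).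

Lemma wsum_cons l (a : letter g) w :
  wsum l (a :: w) = (if a.2 then l a.1 else - l a.1) + wsum l w.
Proof. by rewrite /wsum big_cons. Qed.
Lemma wsum1 l (a : letter g) : wsum l [:: a] = (if a.2 then l a.1 else - l a.1).
Proof. by rewrite wsum_cons /wsum big_nil addr0. Qed.
Lemma wsum_nil l : wsum l ([::] : word g) = 0.
Proof. by rewrite /wsum big_nil. Qed.

Lemma PhiW_nil : PW ([::] : word g) = 1%:M.
Proof. by rewrite /PhiW !wsum_nil mulr1 scale1r. Qed.

Lemma PhiW_cons a w : PW (a :: w) = PW [:: a] *m PW w.
Proof.
rewrite /PhiW wsum_cons [wsum lA _]wsum_cons !wsum1.
rewrite !expfzDr ?t_neq0 ?s_neq0 // -scalemxAl -scalemxAr scalerA /= mulmx1.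
by rewrite mulrACA.
Qed.

Lemma PhiZ_nil : PZ ([::] : zgroup g) = 0.
Proof. by rewrite /PhiZ big_nil. Qed.
Lemma PhiZ_cat x y : PZ (x ++ y) = PZ x + PZ y.
Proof. by rewrite /PhiZ big_cat. Qed.
Lemma PhiZ_map a x : PZ [seq (cu.1, a :: cu.2) | cu <- x] = PW [:: a] *m PZ x.
Proof.
rewrite /PhiZ big_map mulmx_sumr; apply: eq_bigr => cu _ /=.
by rewrite PhiW_cons scalemxAr.
Qed.

Lemma ofR_unit k : map_mx (@ofR R) (rho k) \in unitmx.
Proof. by rewrite unitmxE det_map_mx rmorph_unit // -unitmxE. Qed.

Lemma PhiW_inv k : PW [:: (k, false)] *m PW [:: (k, true)] = 1%:M.
Proof.
rewrite -PhiW_cons /PhiW wsum_cons [wsum lA _]wsum_cons !wsum1 /= !addNr.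
by rewrite mulr1 scale1r /= mulmx1 mulVmx // ofR_unit.
Qed.

Definition Xg (j : 'I_g) := PW [:: (j, true)].

Lemma fox_fund (w : word g) :
  \sum_(j < g) PZ (fox j w) *m (Xg j - 1%:M) = PW w - 1%:M.
Proof.
elim: w => [|a w IH].
  by rewrite PhiW_nil subrr big1 // => j _; rewrite /= PhiZ_nil mul0mx.
rewrite /=.
under eq_bigr do rewrite PhiZ_cat PhiZ_map mulmxDl -mulmxA.
rewrite big_split /= -mulmx_sumr IH.
rewrite (bigD1 a.1) //= eqxx big1 => [|j /negbTE hj]; last first.
  by rewrite eq_sym hj PhiZ_nil mul0mx.
have e1 : (1%Z)%:~R = 1 :> F by [].
have e2 : ((-1)%Z)%:~R = -1 :> F by [].
rewrite addr0 [PW (_ :: w)]PhiW_cons; case: a => k [] /=; rewrite /PhiZ big_seq1 /= ?PhiW_nil ?mulmx1.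
  by rewrite e1 scale1r mul1mx mulmxBr mulmx1 /Xg zh2.
by rewrite e2 scaleN1r mulNmx mulmxBr /Xg PhiW_inv mulmx1 mulmxBr mulmx1 opprB zh2.
Qed.

End Fox.

Lemma zh3 (W : zmodType) (a b x y : W) : a + (y - b) = a - b + x + (y - x).
Proof. by rewrite -(addrA (a - b)) [x + _]addrC subrK [y - b]addrC addrA. Qed.

Section Sylv.
Variable F : comNzRingType.

Lemma sylvester m k (A : 'M[F]_(m, k)) (B : 'M[F]_(k, m)) :
  \det (1%:M + A *m B) = \det (1%:M + B *m A).
Proof.
have e1 : block_mx 1%:M 0 B 1%:M *m block_mx 1%:M (- A) 0 (1%:M + B *m A)
   = block_mx 1%:M (- A) B 1%:M.
  rewrite mulmx_block ?mul1mx ?mul0mx ?mulmx0 ?mulmx1 ?addr0 ?add0r mulmxN addrCA addNr addr0 //.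
have e2 : block_mx (1%:M + A *m B) (- A) 0 1%:M *m block_mx 1%:M 0 B 1%:M
   = block_mx 1%:M (- A) B 1%:M.
  rewrite mulmx_block ?mul1mx ?mul0mx ?mulmx0 ?mulmx1 ?addr0 ?add0r.
  by rewrite mulNmx addrK.
transitivity (\det (block_mx 1%:M (- A) B 1%:M)).
  by rewrite -e2 det_mulmx det_ublock det_lblock !det1 !mulr1.
by rewrite -e1 det_mulmx det_lblock det_ublock !det1 !mul1r.
Qed.

Lemma keydet N n (B : 'M[F]_N) (L : 'M[F]_(n, N)) (U V A0 : 'M[F]_(N, n)) c :
  L *m U = 1%:M -> B *m V = A0 *m c%:M ->
  \det B * \det (L *m V) = c ^+ n * \det (B - B *m U *m L + A0 *m L).
Proof.
move=> hLU hBV.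
set E := B - B *m U *m L + A0 *m L.
have hT : \det (1%:M + (V - U) *m L) = \det (L *m V).
  by rewrite sylvester mulmxBr hLU addrC subrK.
have hEU : E *m U = A0 by rewrite /E !mulmxDl mulNmx -!mulmxA hLU !mulmx1 subrr add0r.
have hS : \det (1%:M + U *m ((c - 1) *: L)) = c ^+ n.
  by rewrite sylvester -scalemxAl hLU -{1}(scale1r 1%:M) -scalerDl addrC subrK scalemx1 det_scalar.
rewrite -hT -hS [RHS]mulrC -!det_mulmx; congr (\det _).
rewrite mulmxDr mulmx1 mulmxBl mulmxBr !mulmxA hBV mul_mx_scalar -scalemxAl.
rewrite mulmxDr mulmx1 -scalemxAr -scalemxAr mulmxA hEU scalerBl scale1r /E.
by rewrite (zh3 _ _ (A0 *m L)).
Qed.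

End Sylv.

Section D.
Variable R : idomainType.
Definition ev1 := map_poly (horner_eval (1 : R)).
Definition ps : {poly {poly R}} := (1 - 'X)%:P.

Lemma ev1_ps : ev1 ps = 0.
Proof. by rewrite /ev1 map_polyC /= horner_evalE !hornerE subrr. Qed.

Lemma ps_neq0 : ps != 0.
Proof. by rewrite /ps polyC_eq0 -opprB oppr_eq0 polyXsubC_eq0. Qed.

Lemma ker_ev1 P : ev1 P = 0 -> exists P1, P = ps * P1.
Proof.
move=> h; pose d : {poly R} := ('X - 1%:P).
have hd : forall i, d %| P`_i.
  move=> i; rewrite dvdp_XsubCl /root; have := congr1 (fun q : {poly R} => q`_i) h.
  by rewrite /ev1 coef_map /= horner_evalE coef0 => ->.
exists (\poly_(i < size P) (- (P`_i %/ d))).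
apply/polyP => i; rewrite /ps mul_polyC coefZ coef_poly.
case: ltnP => hi; last by rewrite mulr0 nth_default.
rewrite mulrN -mulNr opprB mulrC -polyC1 Pdiv.IdomainUnit.divpK //.
by rewrite lead_coefXsubC unitr1.
Qed.

Lemma cancel_ps n : forall P W Y, ps ^+ n * Y = P * W -> ev1 W != 0 ->
  exists P', P = ps ^+ n * P'.
Proof.
elim: n => [|n IH] P W Y h hW; first by exists P; rewrite expr0 mul1r.
have : ev1 P * ev1 W = 0.
  by rewrite -rmorphM -h rmorphM rmorphXn [X in X ^+ _]ev1_ps expr0n mul0r.
move/eqP; rewrite mulf_eq0 (negbTE hW) orbF => /eqP /ker_ev1 [P1 hP1].
move: h; rewrite hP1 exprS -!mulrA => /(mulfI ps_neq0) h.
have [P' ->] := IH _ _ _ h hW.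
by exists P'; rewrite mulrA.
Qed.
End D.

Lemma fld (K : fieldType) (x y z m1 g m2 u : K) : m1 != 0 -> g != 0 -> m2 != 0 ->
  x / m1 * (y / g) = u * (z / m2) -> x * y * m2 = u * z * m1 * g.
Proof.
move=> h1 h2 h3 e.
have -> : x * y * m2 = x / m1 * (y / g) * (m1 * g * m2) by field; apply/andP.
by rewrite e; field.
Qed.

Section Fin.
Variable R : idomainType.
Local Notation F := (LFrac R).
Local Notation t := (tvar R).
Local Notation s := (svar R).

Lemma mono_poly a b : t ^+ a * s ^+ b = ofpoly ('X ^+ a * ('X%:P) ^+ b).
Proof. by rewrite ofpolyM !ofpolyX. Qed.

Lemma ofpoly_ps : ofpoly (@ps R) = 1 - s.
Proof. by rewrite /ps polyCB polyC1 ofpolyD ofpolyN ofpoly1. Qed.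

Lemma ev1M (p q : {poly {poly R}}) : ev1 (p * q) = ev1 p * ev1 q.
Proof. exact: rmorphM. Qed.
Lemma ev1Xn c : @ev1 R ('X ^+ c) = 'X ^+ c.
Proof. by rewrite /ev1 map_polyXn. Qed.
Lemma ev1C (c : {poly R}) : ev1 (c%:P) = (c.[1])%:P.
Proof. by rewrite /ev1 map_polyC. Qed.

Lemma ev1_mono c d : @ev1 R ('X ^+ c * ('X%:P) ^+ d) != 0.
Proof.
rewrite -(rmorphXn (@polyC {poly R})) ev1M ev1Xn ev1C hornerXn expr1n mulr1.
by rewrite expf_neq0 // polyX_eq0.
Qed.

Lemma final n (D h E : F) : laurent D -> laurent E ->
  (exists H Gm, Gm != 0 /\ h * ofpoly Gm = ofpoly H /\ @ev1 R H != 0) ->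
  D * h = (1 - s) ^+ n * E -> exists G, laurent G /\ D = (1 - s) ^+ n * G.
Proof.
move=> [P [a [b ->]]] [Q [c [d ->]]] [H [Gm [hG [hh hH]]]] e.
have hGm : ofpoly Gm != 0 by rewrite ofpoly_eq0; exact: hG.
have eh : h = ofpoly H / ofpoly Gm by rewrite -hh (mulfK hGm).
rewrite eh in e.
have := fld (@mono_neq0 R _ _) hGm (@mono_neq0 R _ _) e.
rewrite !mono_poly -ofpoly_ps -ofpolyX -!ofpolyM => /ofpoly_inj e2.
have [P' eP] : exists P', P = @ps R ^+ n * P'.
  apply: (@cancel_ps R n P (H * ('X ^+ c * 'X%:P ^+ d)) (Q * ('X ^+ a * 'X%:P ^+ b) * Gm)).
    by move: e2; rewrite -!mulrA => ->.
  by rewrite ev1M (mulf_neq0 hH (ev1_mono _ _)).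
exists (ofpoly P' / (t ^+ a * s ^+ b)); split; first by exists P', a, b.
by rewrite eP ofpolyM ofpolyX ofpoly_ps mulrA mono_poly.
Qed.

End Fin.

Definition pp (z : int) : nat := match z with Posz m => m | Negz _ => 0 end.
Definition np (z : int) : nat := match z with Posz _ => 0 | Negz m => m.+1 end.

Lemma expz_split (K : fieldType) (x : K) z : x ^ z = x ^+ pp z / x ^+ np z.
Proof.
case: z => m /=; first by rewrite expr0 divr1.
by rewrite NegzE -invr_expz div1r.
Qed.

Section H.
Variable R : idomainType.
Local Notation F := (LFrac R).
Local Notation t := (tvar R).
Local Notation s := (svar R).
Local Notation PP := {poly {poly R}}.

Definition tof : PP -> F := @FracField.tofrac _.
Lemma tofE (p : PP) : tof p = ofpoly p. Proof. by []. Qed.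

Local Notation phi := ((horner_eval (0 : R)) \o (map_poly (horner_eval (1 : R)))).
Lemma phiE (p : PP) : phi p = (ev1 p).[0]. Proof. by []. Qed.

Lemma phiCC (c : R) : phi (c%:P%:P) = c.
Proof. by rewrite phiE ev1C hornerC hornerC. Qed.

Lemma phi_mono c d : phi ('X ^+ c * ('X%:P) ^+ d) = 0 ^+ c.
Proof.
rewrite phiE -(rmorphXn (@polyC {poly R})) ev1M ev1Xn ev1C hornerXn expr1n mulr1.
by rewrite hornerXn.
Qed.

Lemma hrep n (M : 'M[R]_n) (a b : int) : M \in unitmx -> a != 0 ->
  exists H Gm, Gm != 0 /\
    \det ((t ^ a * s ^ b) *: (map_mx (@ofR R) M *m 1%:M) - 1%:M) * ofpoly Gm = ofpoly H
    /\ ev1 H != 0.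
Proof.
move=> hM ha.
pose al : PP := 'X ^+ pp a * ('X%:P) ^+ pp b.
pose be : PP := 'X ^+ np a * ('X%:P) ^+ np b.
pose Mp : 'M[PP]_n := map_mx (fun x => x%:P%:P) M.
pose Np := al *: Mp - be%:M.
have hbe : be != 0.
  by apply: mulf_neq0; apply: expf_neq0; rewrite ?polyC_eq0 polyX_eq0.
have hbeF : tof be != 0 by rewrite tofE ofpoly_eq0.
have hc : t ^ a * s ^ b = tof al / tof be.
  rewrite /tvar /svar !expz_split !tofE /al /be !ofpolyM !ofpolyX.
  by rewrite mulf_div.
have hMp : map_mx tof Mp = map_mx (@ofR R) M.
  by apply/matrixP => i j; rewrite !mxE.
have hN : (t ^ a * s ^ b) *: (map_mx (@ofR R) M *m 1%:M) - 1%:M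
          = (tof be)^-1 *: map_mx tof Np.
  rewrite map_mxB map_mxZ map_scalar_mx hMp scalerBr scalerA scale_scalar_mx.
  by rewrite mulVf // mulmx1 hc mulrC.
exists (\det Np), (be ^+ n); split; first exact: expf_neq0.
split.
  rewrite hN detZ det_map_mx -!tofE (tofE (be ^+ n)) ofpolyX -tofE mulrAC -exprMn (mulVf hbeF) expr1n mul1r.
  exact: erefl.
apply/negP => /eqP h0.
have : phi (\det Np) = 0 by rewrite phiE h0 horner0.
rewrite -det_map_mx /Np map_mxB map_mxZ map_scalar_mx.
have -> : map_mx phi Mp = M by apply/matrixP => i j; rewrite !mxE phiCC.
rewrite [X in X *: M](_ : _ = 0 ^+ pp a); last exact: phi_mono.
rewrite [X in X%:M](_ : _ = 0 ^+ np a); last exact: phi_mono.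
have key : ((pp a == 0)%N && (np a != 0)%N) || ((pp a != 0)%N && (np a == 0)%N).
  by case: (a) ha => [[|m]|m].
case: (pp a) (np a) key => [|p] [|q] //= _.
  rewrite expr0 expr0n /= scale1r (raddf0 (@scalar_mx R n)) subr0.
  move: hM; rewrite unitmxE => hu hd; move: hu; rewrite hd unitr0.
  by [].
- rewrite expr0 expr0n /= scale0r sub0r.
  rewrite -(raddfN (@scalar_mx R n)) det_scalar => /eqP; rewrite expf_eq0 oppr_eq0 oner_eq0 andbF.
  by [].
Qed.
End H.

Section Aux.
Variables (R : idomainType) (g n : nat) (lK lA : 'I_g -> int) (rho : 'I_g -> 'M[R]_n).
Hypothesis hunit : forall k, rho k \in unitmx.
Local Notation F := (LFrac R).
Local Notation t := (tvar R).
Local Notation s := (svar R).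
Local Notation PW := (PhiW lK lA rho).
Local Notation PZ := (PhiZ lK lA rho).

Lemma invmx_map k : invmx (map_mx (@ofR R) (rho k)) = map_mx (@ofR R) (invmx (rho k)).
Proof.
have h : map_mx (@ofR R) (rho k) *m map_mx (@ofR R) (invmx (rho k)) = 1%:M.
  by rewrite -map_mxM mulmxV ?hunit // map_mx1.
rewrite -[invmx _]mulmx1 -h mulmxA mulVmx ?mul1mx //.
exact: ofR_unit.
Qed.

Lemma mxeval_map (w : word g) :
  mxeval (fun k => map_mx (@ofR R) (rho k)) w = map_mx (@ofR R) (mxeval rho w).
Proof.
elim: w => [|a w IH] /=; first by rewrite map_mx1.
rewrite IH map_mxM; congr (_ *m _).
by case: a.2; rewrite ?invmx_map.
Qed.

Lemma lmx_PhiW w : lmx (PW w).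
Proof.
move=> i j; rewrite /PhiW mxeval_map !mxE.
apply: laurentM; first by apply: laurentM; [apply: laurent_tz|apply: laurent_sz].
exact: laurent_ofR.
Qed.

Lemma lmx_PhiZ x : lmx (PZ x).
Proof.
move=> i j; rewrite /PhiZ summxE; apply: laurent_sum => cw _.
rewrite mxE; apply: laurentM; first exact: laurent_int.
exact: lmx_PhiW.
Qed.

Lemma PhiW_rel w : wsum lK w = 0 -> wsum lA w = 0 -> mxeval rho w = 1%:M ->
  PW w = 1%:M.
Proof.
move=> h1 h2 h3; rewrite /PhiW h1 h2 mxeval_map h3 map_mx1 mulr1 scale1r.
by [].
Qed.
End Aux.

End Helpers.
Import Helpers.

Theorem lemma6p2 (R : idomainType) (g n : nat)
    (r : 'I_g -> word g.+1)
    (lK lA : 'I_g.+1 -> int)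
    (rho : 'I_g.+1 -> 'M[R]_n)
    (hK_rel : forall i, wsum lK (r i) = 0)
    (hA_rel : forall i, wsum lA (r i) = 0)
    (hrho_unit : forall k, rho k \in unitmx)
    (hrho_rel : forall i, mxeval rho (r i) = 1%:M)
    (hK_x1 : lK ord0 = 0) (hA_x1 : lA ord0 = 1)
    (hrho_x1 : rho ord0 = 1%:M)
    (hmer : exists w : word g.+1, wsum lK w = 1 /\ wsum lA w = 0) :
  exists G : LFrac R, laurent G /\
    \det (Bmx lK lA rho r) = (1 - svar R) ^+ n * G.
Proof.
have [k hk] : exists k : 'I_g, lK (lift ord0 k) != 0.
  case: (pickP (fun k : 'I_g => lK (lift ord0 k) != 0)) => [k hk|hnone].
    by exists k.
  exfalso; case: hmer => w [hw _].
  have : wsum lK w = 0.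
    rewrite /wsum big1 // => a _.
    have h0 : lK a.1 = 0.
      case: (unliftP ord0 a.1) => [j ->|->] //.
      by have := hnone j; move/negbFE/eqP.
    by case: a.2; rewrite h0 ?oppr0.
  by rewrite hw.
pose B := Bmx lK lA rho r.
pose A0 := \mxcol_(i < g) PhiZ lK lA rho (fox ord0 (r i)).
pose V := \mxcol_(j < g) (Xg lK lA rho (lift ord0 j) - 1%:M).
pose L := \mxrow_(j < g) (if j == k then 1%:M else 0 : 'M[LFrac R]_n).
pose U := \mxcol_(j < g) (if j == k then 1%:M else 0 : 'M[LFrac R]_n).
have hLU : L *m U = 1%:M.
  rewrite mul_mxrow_mxcol (bigD1 k) //= eqxx mulmx1 big1 ?addr0 // => j /negbTE ->.
  by rewrite mul0mx.
have hLV : L *m V = Xg lK lA rho (lift ord0 k) - 1%:M.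
  rewrite mul_mxrow_mxcol (bigD1 k) //= eqxx mul1mx big1 ?addr0 // => j /negbTE ->.
  by rewrite mul0mx.
have hX0 : Xg lK lA rho ord0 = (svar R)%:M.
  rewrite /Xg /PhiW !wsum1 /= hK_x1 hA_x1 hrho_x1 map_mx1 mulmx1 expr0z mul1r expr1z.
  by rewrite scalemx1.
have hBV : B *m V = A0 *m (1 - svar R)%:M.
  rewrite /B /Bmx mul_mxblock_mxrow /A0 mxcol_mul; apply: eq_mxcol => i.
  have := @fox_fund R g.+1 n lK lA rho hrho_unit (r i).
  rewrite big_ord_recl (@PhiW_rel R g.+1 n lK lA rho hrho_unit (r i) (hK_rel i) (hA_rel i) (hrho_rel i)) subrr hX0.
  move/eqP; rewrite addrC addr_eq0 => /eqP ->.
  by rewrite -mulmxN opprB (raddfB (@scalar_mx _ n)).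
have := keydet hLU hBV; rewrite hLV => e.
have lB : lmx B.
  by move=> x y; rewrite /B /Bmx /mxblock mxE; apply: lmx_PhiZ.
have l1 : forall (M : 'M[LFrac R]_n), M = 1%:M \/ M = 0 -> lmx M.
  move=> M [->|->] x y; rewrite mxE; [case: (x == y)|]; 
    [exact: laurent1|exact: laurent0|exact: laurent0].
have lU : lmx U.
  move=> x y; rewrite /U /mxcol mxE; apply: l1; case: eqP; by [left|right].
have lL : lmx L.
  move=> x y; rewrite /L /mxrow mxE; apply: l1; case: eqP; by [left|right].
have lA0 : lmx A0.
  by move=> x y; rewrite /A0 /mxcol mxE; apply: lmx_PhiZ.
apply: (final _ _ _ e).
- exact: laurent_det.
- apply: laurent_det; apply: lmx_add; last exact: lmx_mul.
  apply: lmx_add => //; apply: lmx_opp; apply: lmx_mul => //; exact: lmx_mul.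
rewrite /Xg /PhiW !wsum1 /=.
exact: hrep.
Qed.
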